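(* Let $Z$ be a pseudo-triangulation and $S=\{(e_1,f_1),\dots,(e_k,f_k)\}$ a finite set of pairs of darts of $Z$. Then there exist a pseudo-triangulation $Z^*$ and a homomorphism $\phi^*:Z\to Z^*$ such that: $\phi^*$ respects $S$; $Z^*$ is a minimal image of $Z$ under $\phi^*$; and for every homomorphism $\phi'$ from $Z$ to a pseudo-triangulation $Z'$ that respects $S$ there is a homomorphism $\psi:Z^*\to Z'$ with $\psi\circ\phi^*=\phi'$. The pair $(Z^*,\phi^* )$ is unique up to isomorphism: if $(Z_1^*,\phi_1^* )$ and $(Z_2^*,\phi_2^* )$ both have these properties, there is an isomorphism $\chi:Z_1^*\to Z_2^*$ with $\chi\circ\phi_1^*=\phi_2^*$.
   Context: A dart representation consists of a finite set $V$ of vertices, a finite set $D$ of darts, and maps $\mathrm{head}:D\to V$, $\mathrm{rev}:D\to D$, $\mathrm{succ},\mathrm{pred}:D\to D\cup\{\mathrm{nil}\}$; a dart may be its own reverse. Write $\mathrm{tail}(e)=\mathrm{head}(\mathrm{rev}(e))$. Requirements: (M1) every vertex is the head of some dart; (M2) $\mathrm{rev}(\mathrm{rev}(e))=e$; (M3) for darts $e,f$, $e=\mathrm{pred}(f)$ iff $f=\mathrm{succ}(e)$; (M4) if $\mathrm{succ}(e)=f\ne\mathrm{nil}$ then $\mathrm{head}(e)=\mathrm{head}(f)$; (M5) if $\mathrm{succ}(e)\ne\mathrm{nil}$, then $f=\mathrm{rev}(\mathrm{succ}(e))$, $g=\mathrm{rev}(\mathrm{succ}(f))$ are defined (non-nil)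 and $e=\mathrm{rev}(\mathrm{succ}(g))$. A dart $e$ is a boundary dart if $\mathrm{succ}(e)$ or $\mathrm{pred}(e)$ is nil; its head is then a boundary vertex; other vertices are inner. The succ/pred pointers partition $D$ into doubly linked lists, cyclic or acyclic. (M6) For each vertex $v$ there is exactly one such list consisting of the darts with head $v$ (its incidence list; its length is the degree $d(v)$); it is cyclic if $v$ is inner and acyclic (nil at both ends) if $v$ is boundary. A pseudo-triangulation is a dart representation satisfying (M1)–(M6). A homomorphism $\phi:Z\to Z'$ of dart representations maps vertices to vertices and darts to darts so that $\mathrm{head}(\phi(e))=\phi(\mathrm{head}(e))$, $\mathrm{rev}(\phi(e))=\phi(\mathrm{rev}(e))$, and $\mathrm{succ}(\phi(e))=\phi(\mathrm{succ}(e))$ whenever $\mathrm{succ}(e)\ne\mathrm{nil}$, and likewise for pred. $\phi$ respects $S$ if $\phi(e_i)=\phi(f_i)$ for all $i$. $Z'$ is a minimal image of $Z$ under $\phi$ if every vertex and dart of $Z'$ is an image under $\phi$, and for every dart $e'$ of $Z'$, $\mathrm{succ}(e')\ne\mathrm{nil}$ iff some dart $e$ with $\phi(e)=e'$ has $\mathrm{succ}(e)\ne\mathrm{nil}$, and the same for pred. An isomorphism is a bijective homomorphism whose inverse is a homomorphism. *)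

(* Defs.v *)
From mathcomp Require Import all_boot.
Set Implicit Arguments. Unset Strict Implicit. Unset Printing Implicit Defensive.

(* A dart representation: finite vertex set, finite dart set, and maps
   head, rev, succ, pred; nil is represented by None. *)
Record dartrep := DartRep {
  vert : finType;
  dart : finType;
  head : dart -> vert;
  rev  : dart -> dart;
  succ : dart -> option dart;
  pred : dart -> option dart }.

Definition tail (Z : dartrep) (e : dart Z) : vert Z := head (rev e).

Definition boundary_dart (Z : dartrep) (e : dart Z) : Prop :=
  succ e = None \/ pred e = None.

Definition boundary_vertex (Z : dartrep) (v : vert Z) : Prop :=
  exists e : dart Z, head e = v /\ boundary_dart e.

Definition inner_vertex (Z : dartrep) (v : vert Z) : Prop := ~ boundary_vertex v.

Definition succ_rel (Z : dartrep) : rel (dart Z) := fun e f => succ e == Some f.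

Definition same_list (Z : dartrep) (e f : dart Z) : bool :=
  connect (@succ_rel Z) e f || connect (@succ_rel Z) f e.

Definition M1 (Z : dartrep) := forall v : vert Z, exists e : dart Z, head e = v.
Definition M2 (Z : dartrep) := forall e : dart Z, rev (rev e) = e.
Definition M3 (Z : dartrep) := forall e f : dart Z, pred f = Some e <-> succ e = Some f.
Definition M4 (Z : dartrep) := forall e f : dart Z, succ e = Some f -> head e = head f.
Definition M5 (Z : dartrep) := forall e s : dart Z, succ e = Some s ->
  exists s2, succ (rev s) = Some s2 /\
  exists s3, succ (rev s2) = Some s3 /\ rev s3 = e.
(* M6: for each vertex v, the darts with head v form exactly one list
   (any two of them lie on a common list, and lists are head-homogeneous by M4);
   the list is cyclic for inner v (every dart has succ and pred) and acyclic,
   with nil at both ends, for boundary v. *)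
Definition M6 (Z : dartrep) :=
  (forall e f : dart Z, head e = head f -> same_list e f) /\
  (forall v : vert Z, inner_vertex v ->
     forall e : dart Z, head e = v -> succ e <> None /\ pred e <> None) /\
  (forall v : vert Z, boundary_vertex v ->
     (exists e : dart Z, head e = v /\ succ e = None) /\
     (exists e : dart Z, head e = v /\ pred e = None)).

Definition pseudo_triangulation (Z : dartrep) : Prop :=
  [/\ M1 Z, M2 Z, M3 Z, M4 Z & M5 Z /\ M6 Z].

Record hom (Z Z' : dartrep) := Hom {
  homV : vert Z -> vert Z';
  homD : dart Z -> dart Z' }.

Definition is_hom (Z Z' : dartrep) (phi : hom Z Z') : Prop :=
  [/\ forall e, head (homD phi e) = homV phi (head e),
      forall e, rev (homD phi e) = homD phi (rev e),
      forall e f, succ e = Some f -> succ (homD phi e) = Some (homD phi f) &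
      forall e f, pred e = Some f -> pred (homD phi e) = Some (homD phi f)].

Definition respects (Z Z' : dartrep) (phi : hom Z Z') (S : seq (dart Z * dart Z)) :=
  forall p, p \in S -> homD phi p.1 = homD phi p.2.

Definition minimal_image (Z Z' : dartrep) (phi : hom Z Z') : Prop :=
  [/\ forall v' : vert Z', exists v, homV phi v = v',
      forall e' : dart Z', exists e, homD phi e = e',
      forall e' : dart Z', succ e' <> None <->
         exists e, homD phi e = e' /\ succ e <> None &
      forall e' : dart Z', pred e' <> None <->
         exists e, homD phi e = e' /\ pred e <> None].

Definition hom_comp (Z1 Z2 Z3 : dartrep) (psi : hom Z2 Z3) (phi : hom Z1 Z2) : hom Z1 Z3 :=
  Hom (fun v => homV psi (homV phi v)) (fun e => homD psi (homD phi e)).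

Definition hom_eq (Z Z' : dartrep) (phi phi' : hom Z Z') : Prop :=
  (forall v, homV phi v = homV phi' v) /\ (forall e, homD phi e = homD phi' e).

Definition hom_id (Z : dartrep) : hom Z Z := Hom id id.

Definition is_iso (Z Z' : dartrep) (chi : hom Z Z') : Prop :=
  is_hom chi /\ exists chi' : hom Z' Z, is_hom chi' /\
    hom_eq (hom_comp chi' chi) (hom_id Z) /\ hom_eq (hom_comp chi chi') (hom_id Z').

Definition universal_quotient (Z : dartrep) (S : seq (dart Z * dart Z))
    (Zs : dartrep) (phis : hom Z Zs) : Prop :=
  [/\ pseudo_triangulation Zs, is_hom phis, respects phis S, minimal_image phis &
      forall (Z' : dartrep) (phi' : hom Z Z'),
        pseudo_triangulation Z' -> is_hom phi' -> respects phi' S ->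
        exists psi : hom Zs Z', is_hom psi /\ hom_eq (hom_comp psi phis) phi'].

(* Main.v *)
From Stdlib Require Import ClassicalEpsilon.
From mathcomp Require Import all_boot zify.
Require Import Defs.
Set Implicit Arguments. Unset Strict Implicit. Unset Printing Implicit Defensive.

Record eqv (T : finType) := Eqv {
  eqr :> rel T;
  eqr_refl : forall x, eqr x x;
  eqr_sym : forall x y, eqr x y -> eqr y x;
  eqr_trans : forall x y z, eqr x y -> eqr y z -> eqr x z }.

Definition rep (T : finType) (E : eqv T) (x : T) : T := odflt x [pick y | E x y].

Lemma rep_rel T (E : eqv T) x : E x (rep E x).
Proof.
rewrite /rep; case: pickP => [y //|H].
by move: (H x); rewrite /= eqr_refl.
Qed.

Lemma rep_eq T (E : eqv T) x y : E x y -> rep E x = rep E y.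
Proof.
move=> Hxy; rewrite /rep.
have -> : [pick z | E x z] = [pick z | E y z].
  apply: eq_pick => z; apply/idP/idP => H.
    exact: eqr_trans (eqr_sym Hxy) H.
  exact: eqr_trans Hxy H.
case: pickP => [z //|H]; by move: (H y); rewrite /= eqr_refl.
Qed.

Lemma rep_idem T (E : eqv T) x : rep E (rep E x) = rep E x.
Proof. by apply: rep_eq; apply: eqr_sym; apply: rep_rel. Qed.

Definition Q (T : finType) (E : eqv T) : finType := {x : T | rep E x == x}.

Definition cls (T : finType) (E : eqv T) (x : T) : Q E :=
  @exist T (fun y => rep E y == y) (rep E x) (introT eqP (rep_idem E x)).

Lemma cls_eq T (E : eqv T) x y : cls E x = cls E y <-> E x y.
Proof.
split => [H | H].
  have H1 : rep E x = rep E y by move: (f_equal val H).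
  apply: eqr_trans (rep_rel E x) _; rewrite H1; exact: eqr_sym (rep_rel E y).
by apply: val_inj => /=; apply: rep_eq.
Qed.

Lemma cls_val T (E : eqv T) (q : Q E) : cls E (val q) = q.
Proof. by apply: val_inj => /=; apply/eqP; case: q. Qed.

Lemma val_cls T (E : eqv T) x : E x (val (cls E x)).
Proof. exact: rep_rel. Qed.

Definition liftQ (T : finType) (E : eqv T) (o : T -> option T) (q : Q E) : option (Q E) :=
  if [pick y | (cls E y == q) && (o y != None)] is Some y then omap (cls E) (o y) else None.

Arguments liftQ [T] E o q.

Definition compat (T : finType) (E : eqv T) (o : T -> option T) :=
  forall x y a b, E x y -> o x = Some a -> o y = Some b -> E a b.

Lemma liftQ_cls T (E : eqv T) o x a : @compat T E o -> o x = Some a ->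
  liftQ E o (cls E x) = Some (cls E a).
Proof.
move=> Hc Ha; rewrite /liftQ; case: pickP => [y /andP [/eqP Hy Hny] | H].
  case Hoy: (o y) Hny => [b|] // _ /=; congr Some; apply/cls_eq.
  apply: Hc Hoy Ha; exact/cls_eq.
by move: (H x); rewrite /= eqxx Ha.
Qed.

Lemma liftQ_char T (E : eqv T) o q z : liftQ E o q = Some z ->
  exists x a, cls E x = q /\ o x = Some a /\ cls E a = z.
Proof.
rewrite /liftQ; case: pickP => [y /andP [/eqP Hy _] | //].
case Hoy: (o y) => [b|] //= [<-]; by exists y, b.
Qed.

Definition asb (P : Prop) : bool := if excluded_middle_informative P then true else false.
Lemma asbP (P : Prop) : asb P <-> P.
Proof. rewrite /asb; case: excluded_middle_informative => //. Qed.

Lemma iter_None (T : Type) (o : T -> option T) n : iter n (obind o) None = None.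
Proof. by elim: n => //= n ->. Qed.

Lemma connect_iter (W : dartrep) (e f : dart W) :
  connect (@succ_rel W) e f <-> exists n, iter n (obind (@succ W)) (Some e) = Some f.
Proof.
split.
  move/connectP => [p Hp ->]; elim: p e Hp => [|a p IH] e /=; first by exists 0.
  move/andP=> [/eqP Hs Hp]; have [n Hn] := IH a Hp; exists n.+1.
  by rewrite iterSr /= Hs.
move=> [n]; elim: n e => [|n IH] e; first by move=> [->].
rewrite iterSr /=; case Hs: (succ e) => [a|]; last by rewrite iter_None.
move/IH; apply: connect_trans; apply: connect1; by rewrite /succ_rel Hs.
Qed.

Lemma succ_inj (W : dartrep) : M3 W -> forall x y z : dart W,
  succ x = Some z -> succ y = Some z -> x = y.
Proof.
move=> H3 x y z /H3 Hx /H3 Hy; rewrite Hx in Hy; by case: Hy.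
Qed.

Lemma iter_back (W : dartrep) : M3 W -> forall n m (a b c : dart W), n <= m ->
  iter n (obind (@succ W)) (Some a) = Some b ->
  iter m (obind (@succ W)) (Some c) = Some b ->
  iter (m - n) (obind (@succ W)) (Some c) = Some a.
Proof.
move=> H3; elim=> [|n IH] m a b c.
  by move=> _ /= [->]; rewrite subn0.
case: m => [|m] // Hnm /=.
case Ha: (iter n _ (Some a)) => [a'|] //=.
case Hc: (iter m _ (Some c)) => [c'|] //= Ha' Hc'.
have E := succ_inj H3 Ha' Hc'; subst c'.
rewrite subSS; apply: (IH m a a' c) => //.
Qed.

Lemma same_list_trans (W : dartrep) : M3 W -> forall a b c : dart W,
  same_list a b -> same_list b c -> same_list a c.
Proof.
move=> H3 a b c; rewrite /same_list.
case/orP => H1; case/orP => H2.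
- by rewrite (connect_trans H1 H2).
- move/connect_iter: H1 => [n Hn]; move/connect_iter: H2 => [m Hm].
  case: (leqP n m) => Hnm.
    apply/orP; right; apply/connect_iter; exists (m - n); exact: (iter_back H3 Hnm Hn Hm).
  apply/orP; left; apply/connect_iter; exists (n - m); exact: (iter_back H3 (ltnW Hnm) Hm Hn).
- move/connect_iter: H1 => [n Hn]; move/connect_iter: H2 => [m Hm].
  case: (leqP n m) => Hnm.
    apply/orP; left; apply/connect_iter; exists (m - n).
    by rewrite -Hn -iterD subnK.
  apply/orP; right; apply/connect_iter; exists (n - m).
  by rewrite -Hm -iterD subnK // ltnW.
- by rewrite (connect_trans H2 H1) orbT.
Qed.

Lemma same_list_sym (W : dartrep) (a b : dart W) : same_list a b -> same_list b a.
Proof. by rewrite /same_list orbC. Qed.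

Lemma iter_cancel (T : finType) (s p : T -> option T)
  (H3 : forall x y, p y = Some x <-> s x = Some y) :
  forall i (a b : T), iter i (obind p) (Some a) = iter i (obind p) (Some b) ->
  iter i (obind p) (Some a) <> None -> a = b.
Proof.
elim=> [|i IH] a b; first by move=> [].
rewrite !iterSr /=.
case Ha: (p a) => [a'|]; last by rewrite iter_None.
case Hb: (p b) => [b'|]; last by move=> ->; rewrite iter_None.
move=> E N; have {E N} E := IH _ _ E N; subst b'.
move/H3: Ha => Ha; move/H3: Hb => Hb; rewrite Ha in Hb; by case: Hb.
Qed.

Lemma find_end (T : finType) (X : eqType) (s p : T -> option T) (h : T -> X)
  (H3 : forall x y, p y = Some x <-> s x = Some y)
  (H4 : forall x y, s x = Some y -> h x = h y) (e : T) :
  s e = None -> exists y, h y = h e /\ p y = None.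
Proof.
move=> Hse.
case: (boolP [exists y, (h y == h e) && (p y == None)]) =>
  [/existsP [y /andP [/eqP H1 /eqP H2]] | Hn]; first by exists y.
exfalso; rewrite negb_exists in Hn.
have Hp : forall y, h y = h e -> exists z, p y = Some z.
  move=> y Hy; move/forallP: Hn => /(_ y); rewrite Hy eqxx /=.
  by case: (p y) => [z|] //; exists z.
pose F := obind p.
have Hit : forall k, exists y, iter k F (Some e) = Some y /\ h y = h e.
  elim=> [|k [y [Hy Hhy]]]; first by exists e.
  have [z Hz] := Hp y Hhy; exists z; split; first by rewrite /= Hy /F /= Hz.
  rewrite -Hhy; apply: H4; by apply/H3.
have noret : forall i j, i < j -> iter i F (Some e) = iter j F (Some e) -> False.
  move=> i j Hij.
  have -> : j = i + (j - i.+1).+1 by lia.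
  rewrite iterD => E.
  have [z [Hz _]] := Hit (j - i.+1).+1.
  rewrite Hz in E.
  have [y [Hy _]] := Hit i.
  have Eez := iter_cancel H3 E (ltac:(by rewrite Hy)).
  subst z; move: Hz; rewrite /= .
  have [w [Hw _]] := Hit (j - i.+1).
  rewrite Hw /F /= => /H3; by rewrite Hse.
pose g (k : 'I_(#|T|.+1)) := odflt e (iter k F (Some e)).
have Hg : injective g.
  move=> i j; rewrite /g.
  have [yi [Hi _]] := Hit i; have [yj [Hj _]] := Hit j.
  rewrite Hi Hj /= => Eij; apply: val_inj => /=.
  case: (ltngtP i j) => // Hlt; exfalso.
    by apply: (noret _ _ Hlt); rewrite Hi Hj Eij.
  by apply: (noret _ _ Hlt); rewrite Hi Hj Eij.
by move: (leq_card g Hg); rewrite card_ord ltnn.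
Qed.

Lemma find_pred_end (W : dartrep) : M3 W -> M4 W -> forall e : dart W,
  succ e = None -> exists y, head y = head e /\ pred y = None.
Proof. move=> H3 H4 e; exact: (@find_end (dart W) _ (@succ W) (@pred W) (@head W) H3 H4 e). Qed.

Lemma find_succ_end (W : dartrep) : M3 W -> M4 W -> forall e : dart W,
  pred e = None -> exists y, head y = head e /\ succ y = None.
Proof.
move=> H3 H4 e.
have H3' : forall x y : dart W, succ y = Some x <-> pred x = Some y.
  by move=> x y; split => H; apply/H3.
have H4' : forall x y : dart W, pred x = Some y -> head x = head y.
  by move=> x y /H3 H; symmetry; apply: H4.
exact: (@find_end (dart W) _ (@pred W) (@succ W) (@head W) H3' H4' e).
Qed.

Lemma connect_cls_gen (W W' : dartrep) (c : dart W -> dart W')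
  (Hc : forall e a, succ e = Some a -> succ (c e) = Some (c a)) e f :
  connect (@succ_rel W) e f -> connect (@succ_rel W') (c e) (c f).
Proof.
move/connect_iter=> [n Hn]; apply/connect_iter; exists n.
elim: n e Hn => [|n IH] e; first by move=> [->].
rewrite !iterSr /=; case Hs: (succ e) => [a|]; last by rewrite iter_None.
rewrite (Hc _ _ Hs) /=; exact: IH.
Qed.

Lemma same_list_gen (W W' : dartrep) (c : dart W -> dart W')
  (Hc : forall e a, succ e = Some a -> succ (c e) = Some (c a)) e f :
  same_list e f -> same_list (c e) (c f).
Proof.
rewrite /same_list => /orP [H|H]; apply/orP; [left|right]; exact: connect_cls_gen.
Qed.

Record closedD (Z : dartrep) (S : seq (dart Z * dart Z)) (R : dart Z -> dart Z -> Prop) : Prop := ClosedD {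
  cD_refl : forall e, R e e;
  cD_sym : forall e f, R e f -> R f e;
  cD_trans : forall e f g, R e f -> R f g -> R e g;
  cD_S : forall p, p \in S -> R p.1 p.2;
  cD_rev : forall e f, R e f -> R (rev e) (rev f);
  cD_succ : forall e f a b, R e f -> succ e = Some a -> succ f = Some b -> R a b;
  cD_pred : forall e f a b, R e f -> pred e = Some a -> pred f = Some b -> R a b }.

Definition deq (Z : dartrep) (S : seq (dart Z * dart Z)) : rel (dart Z) :=
  fun e f => asb (forall R, closedD S R -> R e f).

Lemma deqP (Z : dartrep) (S : seq (dart Z * dart Z)) (e f : dart Z) : deq S e f <-> forall R, closedD S R -> R e f.
Proof. exact: asbP. Qed.

Lemma deq_closed (Z : dartrep) (S : seq (dart Z * dart Z)) : closedD S (fun e f => deq S e f).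
Proof.
split.
- by move=> e; apply/deqP => R [].
- by move=> e f /deqP H; apply/deqP => R HR; apply: (cD_sym HR); apply: H.
- move=> e f g /deqP H1 /deqP H2; apply/deqP => R HR.
  exact: (cD_trans HR (H1 R HR) (H2 R HR)).
- by move=> p Hp; apply/deqP => R HR; apply: (cD_S HR).
- by move=> e f /deqP H; apply/deqP => R HR; apply: (cD_rev HR); apply: H.
- move=> e f a b /deqP H Ha Hb; apply/deqP => R HR; exact: (cD_succ HR (H R HR) Ha Hb).
- move=> e f a b /deqP H Ha Hb; apply/deqP => R HR; exact: (cD_pred HR (H R HR) Ha Hb).
Qed.

Definition ED (Z : dartrep) (S : seq (dart Z * dart Z)) : eqv (dart Z) :=
  @Eqv _ (deq S) (cD_refl (deq_closed S)) (cD_sym (deq_closed S)) (cD_trans (deq_closed S)).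

Record closedV (Z : dartrep) (S : seq (dart Z * dart Z)) (R : vert Z -> vert Z -> Prop) : Prop := ClosedV {
  cV_refl : forall v, R v v;
  cV_sym : forall v w, R v w -> R w v;
  cV_trans : forall u v w, R u v -> R v w -> R u w;
  cV_head : forall e f, deq S e f -> R (head e) (head f) }.

Definition veq (Z : dartrep) (S : seq (dart Z * dart Z)) : rel (vert Z) :=
  fun v w => asb (forall R, closedV S R -> R v w).

Lemma veqP (Z : dartrep) (S : seq (dart Z * dart Z)) (v w : vert Z) : veq S v w <-> forall R, closedV S R -> R v w.
Proof. exact: asbP. Qed.

Lemma veq_closed (Z : dartrep) (S : seq (dart Z * dart Z)) : closedV S (fun v w => veq S v w).
Proof.
split.
- by move=> e; apply/veqP => R [].
- by move=> e f /veqP H; apply/veqP => R HR; apply: (cV_sym HR); apply: H.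
- move=> e f g /veqP H1 /veqP H2; apply/veqP => R HR.
  exact: (cV_trans HR (H1 R HR) (H2 R HR)).
- by move=> e f H; apply/veqP => R HR; apply: (cV_head HR).
Qed.

Definition EV (Z : dartrep) (S : seq (dart Z * dart Z)) : eqv (vert Z) :=
  @Eqv _ (veq S) (cV_refl (veq_closed S)) (cV_sym (veq_closed S)) (cV_trans (veq_closed S)).

Definition QZ (Z : dartrep) (S : seq (dart Z * dart Z)) : dartrep :=
  @DartRep (Q (EV S)) (Q (ED S))
    (fun x => cls (EV S) (head (val x)))
    (fun x => cls (ED S) (rev (val x)))
    (liftQ (ED S) (@succ Z))
    (liftQ (ED S) (@pred Z)).

Definition phiQ (Z : dartrep) (S : seq (dart Z * dart Z)) : hom Z (QZ S) :=
  @Hom Z (QZ S) (cls (EV S)) (cls (ED S)).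

Lemma compat_succ (Z : dartrep) (S : seq (dart Z * dart Z)) : @compat _ (ED S) (@succ Z).
Proof. move=> x y a b; exact: (cD_succ (deq_closed S)). Qed.
Lemma compat_pred (Z : dartrep) (S : seq (dart Z * dart Z)) : @compat _ (ED S) (@pred Z).
Proof. move=> x y a b; exact: (cD_pred (deq_closed S)). Qed.

Lemma headQ (Z : dartrep) (S : seq (dart Z * dart Z)) (e : dart Z) : @head (QZ S) (cls (ED S) e) = cls (EV S) (head e).
Proof.
apply/cls_eq; apply: (cV_head (veq_closed S)); exact: (eqr_sym (val_cls (ED S) e)).
Qed.

Lemma revQ (Z : dartrep) (S : seq (dart Z * dart Z)) (e : dart Z) : @rev (QZ S) (cls (ED S) e) = cls (ED S) (rev e).
Proof.
apply/cls_eq; apply: (cD_rev (deq_closed S)); exact: (eqr_sym (val_cls (ED S) e)).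
Qed.

Lemma succQ (Z : dartrep) (S : seq (dart Z * dart Z)) (e a : dart Z) : succ e = Some a ->
  @succ (QZ S) (cls (ED S) e) = Some (cls (ED S) a).
Proof. move=> H; exact: (@liftQ_cls _ (ED S) (@succ Z) e a (@compat_succ Z S) H). Qed.

Lemma predQ (Z : dartrep) (S : seq (dart Z * dart Z)) (e a : dart Z) : pred e = Some a ->
  @pred (QZ S) (cls (ED S) e) = Some (cls (ED S) a).
Proof. move=> H; exact: (@liftQ_cls _ (ED S) (@pred Z) e a (@compat_pred Z S) H). Qed.

Lemma succQ_char (Z : dartrep) (S : seq (dart Z * dart Z)) (x z : dart (QZ S)) : succ x = Some z ->
  exists e a, cls (ED S) e = x /\ succ e = Some a /\ cls (ED S) a = z.
Proof. exact: liftQ_char. Qed.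

Lemma predQ_char (Z : dartrep) (S : seq (dart Z * dart Z)) (x z : dart (QZ S)) : pred x = Some z ->
  exists e a, cls (ED S) e = x /\ pred e = Some a /\ cls (ED S) a = z.
Proof. exact: liftQ_char. Qed.

Lemma QZ_M3 (Z : dartrep) (S : seq (dart Z * dart Z)) : M3 Z -> M3 (QZ S).
Proof.
move=> H3 x z; split.
  move/predQ_char => [f [e [<- [/H3 He <-]]]]; exact: succQ.
move/succQ_char => [e [f [<- [/H3 He <-]]]]; exact: predQ.
Qed.

Lemma QZ_M4 (Z : dartrep) (S : seq (dart Z * dart Z)) : M4 Z -> M4 (QZ S).
Proof.
move=> H4 x z /succQ_char [e [f [<- [He <-]]]].
by rewrite !headQ (H4 _ _ He).
Qed.

Lemma QZ_pt (Z : dartrep) (S : seq (dart Z * dart Z)) :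
  pseudo_triangulation Z -> pseudo_triangulation (QZ S).
Proof.
move=> [H1 H2 H3 H4 [H5 [H6a [H6b H6c]]]].
have Q3 := @QZ_M3 Z S H3; have Q4 := @QZ_M4 Z S H4.
split.
- move=> v; rewrite -(cls_val v); have [e He] := H1 (val v).
  exists (cls (ED S) e); by rewrite headQ He.
- move=> x; rewrite -(cls_val x) !revQ H2 //.
- exact: Q3.
- exact: Q4.
split.
  move=> x s /succQ_char [e [s0 [<- [Hs <-]]]].
  have [s2 [Hs2 [s3 [Hs3 He]]]] := H5 _ _ Hs.
  exists (cls (ED S) s2); split; first by rewrite revQ; apply: succQ.
  exists (cls (ED S) s3); split; first by rewrite revQ; apply: succQ.
  by rewrite revQ He.
split; last split.
- move=> x y; rewrite -(cls_val x) -(cls_val y) !headQ.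
  set e := val x; set f := val y => /cls_eq /veqP.
  pose R := fun v w : vert Z => forall e f : dart Z, head e = v -> head f = w ->
    @same_list (QZ S) (cls (ED S) e) (cls (ED S) f).
  have Hc : forall e a : dart Z, succ e = Some a ->
     @succ (QZ S) (cls (ED S) e) = Some (cls (ED S) a) by move=> *; apply: succQ.
  have HR : closedV S R.
    split.
    + move=> v e' f' He' Hf'; apply: same_list_gen => //.
      apply: H6a; by rewrite He' Hf'.
    + move=> v w Hvw e' f' He' Hf'; apply: same_list_sym; exact: Hvw.
    + move=> u v w Huv Hvw e' f' He' Hf'.
      have [g Hg] := H1 v.
      exact: (same_list_trans Q3 (Huv _ _ He' Hg) (Hvw _ _ Hg Hf')).
    + move=> e1 f1 Hef e' f' He' Hf'.
      have E : cls (ED S) e1 = cls (ED S) f1 by apply/cls_eq.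
      apply: (same_list_trans Q3 (b := cls (ED S) e1)).
        apply: same_list_gen => //; apply: H6a; by rewrite He'.
      rewrite E; apply: same_list_gen => //; apply: H6a; by rewrite Hf'.
  move=> H; exact: (H R HR).
- move=> v Hin x Hx; split => Hn; apply: Hin; exists x; [split => //; by left | split => //; by right].
- move=> v [x [Hx [Hs | Hp]]].
    split; first by exists x.
    have [y [Hy Hpy]] := find_pred_end Q3 Q4 Hs; exists y; by rewrite Hy.
  split; last by exists x.
  have [y [Hy Hsy]] := find_succ_end Q3 Q4 Hp; exists y; by rewrite Hy.
Qed.

Lemma phiQ_hom (Z : dartrep) (S : seq (dart Z * dart Z)) : is_hom (phiQ S).
Proof.
split => /=.
- move=> e; exact: headQ.
- move=> e; exact: revQ.
- move=> e f; exact: succQ.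
- move=> e f; exact: predQ.
Qed.

Lemma phiQ_resp (Z : dartrep) (S : seq (dart Z * dart Z)) : respects (phiQ S) S.
Proof.
move=> p Hp /=; apply/cls_eq; apply/deqP => R HR; exact: (cD_S HR).
Qed.

Lemma phiQ_min (Z : dartrep) (S : seq (dart Z * dart Z)) : minimal_image (phiQ S).
Proof.
split => /=.
- move=> v; exists (val v); exact: cls_val.
- move=> x; exists (val x); exact: cls_val.
- move=> x; split.
    case Hs: (@succ (QZ S) x) => [z|] // _.
    have [e [a [<- [Ha _]]]] := succQ_char Hs; exists e; by rewrite Ha.
  move=> [e [<- He]]; case Ha: (succ e) He => [a|] // _.
  by move: (succQ S Ha) => /= ->.
- move=> x; split.
    case Hs: (@pred (QZ S) x) => [z|] // _.
    have [e [a [<- [Ha _]]]] := predQ_char Hs; exists e; by rewrite Ha.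
  move=> [e [<- He]]; case Ha: (pred e) He => [a|] // _.
  by move: (predQ S Ha) => /= ->.
Qed.

Lemma phiQ_univ (Z : dartrep) (S : seq (dart Z * dart Z)) (Z' : dartrep) (phi' : hom Z Z') :
  is_hom phi' -> respects phi' S ->
  exists psi : hom (QZ S) Z', is_hom psi /\ hom_eq (hom_comp psi (phiQ S)) phi'.
Proof.
move=> [Hh Hr Hs Hp] Hresp.
have KD : forall e f, deq S e f -> homD phi' e = homD phi' f.
  move=> e f /deqP H; apply: (H (fun e f => homD phi' e = homD phi' f)); split.
  - by [].
  - by move=> *.
  - by move=> e1 f1 g1 -> ->.
  - exact: Hresp.
  - by move=> e1 f1 E; rewrite -!Hr E.
  - move=> e1 f1 a b E /Hs Ha /Hs Hb; rewrite E Hb in Ha; by case: Ha.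
  - move=> e1 f1 a b E /Hp Ha /Hp Hb; rewrite E Hb in Ha; by case: Ha.
have KV : forall v w, veq S v w -> homV phi' v = homV phi' w.
  move=> v w /veqP H; apply: (H (fun v w => homV phi' v = homV phi' w)); split.
  - by [].
  - by move=> *.
  - by move=> e1 f1 g1 -> ->.
  - by move=> e1 f1 /KD E; rewrite -!Hh E.
have CD : forall e, homD phi' (val (cls (ED S) e)) = homD phi' e.
  move=> e; symmetry; apply: KD; exact: (val_cls (ED S) e).
have CV : forall v, homV phi' (val (cls (EV S) v)) = homV phi' v.
  move=> v; symmetry; apply: KV; exact: (val_cls (EV S) v).
exists (@Hom (QZ S) Z' (fun x => homV phi' (val x)) (fun x => homD phi' (val x))).
split; last by split => /=.
split => /=.
- by move=> x; rewrite Hh CV.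
- by move=> x; rewrite Hr CD.
- move=> x z /succQ_char [e [a [<- [Ha <-]]]]; rewrite !CD; exact: Hs.
- move=> x z /predQ_char [e [a [<- [Ha <-]]]]; rewrite !CD; exact: Hp.
Qed.

Theorem lemma9p5 (Z : dartrep) (S : seq (dart Z * dart Z)) :
  pseudo_triangulation Z ->
  (exists (Zs : dartrep) (phis : hom Z Zs), universal_quotient S phis) /\
  (forall (Z1 : dartrep) (phi1 : hom Z Z1) (Z2 : dartrep) (phi2 : hom Z Z2),
     universal_quotient S phi1 -> universal_quotient S phi2 ->
     exists chi : hom Z1 Z2, is_iso chi /\ hom_eq (hom_comp chi phi1) phi2).
Proof.
move=> HZ; split.
  exists (QZ S), (phiQ S); split.
  - exact: QZ_pt.
  - exact: phiQ_hom.
  - exact: phiQ_resp.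
  - exact: phiQ_min.
  - move=> Z' phi' _; exact: phiQ_univ.
move=> Z1 phi1 Z2 phi2 [P1 H1 R1 [M1V M1D _ _] U1] [P2 H2 R2 [M2V M2D _ _] U2].
have [psi [Hpsi [EV1 ED1]]] := U1 Z2 phi2 P2 H2 R2.
have [psi' [Hpsi' [EV2 ED2]]] := U2 Z1 phi1 P1 H1 R1.
exists psi; split; last by split.
split => //; exists psi'; split => //; split; split => /=.
- move=> v; have [u <-] := M1V v; by move: (EV1 u) (EV2 u) => /= -> ->.
- move=> e; have [u <-] := M1D e; by move: (ED1 u) (ED2 u) => /= -> ->.
- move=> v; have [u <-] := M2V v; by move: (EV2 u) (EV1 u) => /= -> ->.
- move=> e; have [u <-] := M2D e; by move: (ED2 u) (ED1 u) => /= -> ->.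
Qed.
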